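(* Let $I$ be an ideal of a ring $R$. Then $R$ is uniquely weakly $I$-clean if and only if $R/I$ is semi Boolean and idempotents can be lifted uniquely weakly modulo $I$.
   Context: All rings are associative with identity; $Idem(R)$ is the set of idempotents of $R$. $R$ is uniquely weakly $I$-clean if for every $x\in R$ there exists a unique $e\in Idem(R)$ such that $x-e\in I$ or $x+e\in I$. A ring $A$ is semi Boolean if for every $x\in A$, $x^2=x$ or $x^2=-x$. Idempotents can be lifted uniquely weakly modulo $I$ if for every $x\in R$ with $x^2-x\in I$ there exists a unique $e\in Idem(R)$ with $x-e\in I$ or $x+e\in I$. *)

(* Defs.v *)
From HB Require Import structures.
From mathcomp Require Import all_boot all_order all_algebra.
Set Implicit Arguments. Unset Strict Implicit. Unset Printing Implicit Defensive.
Import GRing.Theory.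
Local Open Scope ring_scope.

Definition is_idem (R : pzRingType) (e : R) : Prop := e * e = e.

Record two_sided_ideal (R : pzRingType) (I : R -> Prop) : Prop := {
  ideal0 : I 0;
  idealB : forall x y, I x -> I y -> I (x - y);
  idealMl : forall a x, I x -> I (a * x);
  idealMr : forall a x, I x -> I (x * a)
}.

Definition uniquely_weakly_I_clean (R : pzRingType) (I : R -> Prop) : Prop :=
  forall x : R, exists! e : R, is_idem e /\ (I (x - e) \/ I (x + e)).

Definition semi_boolean (A : pzRingType) : Prop :=
  forall x : A, x * x = x \/ x * x = - x.

(* "R/I is semi Boolean", written on representatives: the coset of x
   satisfies (x+I)^2 = x+I or (x+I)^2 = -(x+I), i.e. x^2 - x \in I or
   x^2 + x \in I.  (MathComp only provides quotients by proper ideals of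
   commutative rings, so the quotient ring is unfolded on cosets.) *)
Definition quotient_semi_boolean (R : pzRingType) (I : R -> Prop) : Prop :=
  forall x : R, I (x * x - x) \/ I (x * x + x).

Definition idempotents_lift_uniquely_weakly (R : pzRingType) (I : R -> Prop)
  : Prop :=
  forall x : R, I (x * x - x) ->
    exists! e : R, is_idem e /\ (I (x - e) \/ I (x + e)).

(* Main.v *)
Require Import Defs.
From mathcomp Require Import all_boot all_order all_algebra.
Local Open Scope ring_scope.
Import GRing.Theory.
Set Implicit Arguments.

Section H.
Variables (R : pzRingType) (I : R -> Prop) (hI : two_sided_ideal I).

Lemma IN (y : R) : I y -> I (- y).
Proof. move=> Hy; rewrite -sub0r; apply: (idealB hI) => //; exact: ideal0 hI. Qed.

Lemma ID (a b : R) : I a -> I b -> I (a + b).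
Proof. move=> Ha Hb; rewrite -[b]opprK; apply: (idealB hI) => //; exact: IN. Qed.

Lemma INiff (y : R) : I (- y) <-> I y.
Proof. split=> [H|]; last exact: IN. by rewrite -[y]opprK; apply: IN. Qed.

Lemma eq1 (x e : R) : e * e = e -> x * x - x = (x * (x - e) + (x - e) * e) - (x - e).
Proof.
move=> he; rewrite mulrBr mulrBl he addrA subrK opprB addrA subrK //.
Qed.

Lemma eq2 (x e : R) : e * e = e -> x * x + x = (x * (x + e) - (x + e) * e) + (x + e).
Proof.
move=> he; rewrite mulrDr mulrDl he opprD !addrA addrK (addrAC _ (- e)) subrK //.
Qed.
End H.

Theorem mainTheorem7 (R : pzRingType) (I : R -> Prop)
  (hI : two_sided_ideal I) :
  uniquely_weakly_I_clean I <->
  (quotient_semi_boolean I /\ idempotents_lift_uniquely_weakly I).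
Proof.
split.
- move=> H; split; last by move=> x _; exact: H.
  move=> x; case: (H x) => e [[he [Hm|Hp]] _].
  + left; rewrite (@eq1 _ x e he); apply: (idealB hI) => //.
    apply: (ID hI); [exact: (idealMl hI x Hm) | exact: (Defs.idealMr hI e Hm)].
  + right; rewrite (@eq2 _ x e he); apply: (ID hI) => //; apply: (idealB hI).
    exact: (idealMl hI x Hp). exact: (Defs.idealMr hI e Hp).
- move=> [Hq Hl] x; case: (Hq x) => Hx; first exact: Hl.
  have Hx' : I ((- x) * (- x) - (- x)) by rewrite mulrNN opprK.
  case: (Hl _ Hx') => e [[he Hc] U]; exists e; split.
  + split=> //; case: Hc => Hc.
    * by right; apply/(INiff hI); rewrite opprD.
    * by left; apply/(INiff hI); rewrite opprB addrC.
  + move=> f [hf Hf]; apply: U; split=> //; case: Hf => Hf.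
    * by right; apply/(INiff hI); rewrite opprD opprK.
    * by left; apply/(INiff hI); rewrite opprD !opprK.
Qed.
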